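(* Let $(X,p_X)$ be a non-empty partial metric space. Then there exists a partial metric space $(Y,p_Y)$ with $X\subseteq Y$ and $p_Y$ restricting to $p_X$ on $X\times X$, such that $X$ is dense in $Y$ but $X$ is not symmetrically dense in $Y$.
   Context: A partial metric on a set $X$ is a function $p_X\colon X\times X\to\mathbb{R}_{\geq0}$ such that for all $x,y,z\in X$: (P1) $p_X(x,x)=p_X(x,y)=p_X(y,y)$ implies $x=y$; (P2) $p_X(x,x)\leq p_X(x,y)$; (P3) $p_X(x,y)=p_X(y,x)$; (P4) $p_X(x,z)+p_X(y,y)\leq p_X(x,y)+p_X(y,z)$. For $x\in X$ and $\varepsilon>0$, the open ball is $B_\varepsilon(x)=\{y\in X: p_X(x,y)<p_X(x,x)+\varepsilon\}$. A subset $A\subseteq X$ is dense in $X$ if for every $x\in X$ and every $\varepsilon>0$ there is $y\in A$ with $y\in B_\varepsilon(x)$. It is symmetrically dense in $X$ if for every $x\in X$ and every $\varepsilon>0$ there is $y\in A$ with $x\in B_\varepsilon(y)$ and $y\in B_\varepsilon(x)$. *)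

(* Defs.v *)
From Stdlib Require Import Reals.
Open Scope R_scope.

Definition is_partial_metric {X : Type} (p : X -> X -> R) : Prop :=
  (forall x y, 0 <= p x y) /\
  (forall x y, p x x = p x y -> p x y = p y y -> x = y) /\
  (forall x y, p x x <= p x y) /\
  (forall x y, p x y = p y x) /\
  (forall x y z, p x z + p y y <= p x y + p y z).

Definition pball {X : Type} (p : X -> X -> R) (x : X) (eps : R) (y : X) : Prop :=
  p x y < p x x + eps.

Definition pdense {X : Type} (p : X -> X -> R) (A : X -> Prop) : Prop :=
  forall x eps, 0 < eps -> exists y, A y /\ pball p x eps y.

Definition psym_dense {X : Type} (p : X -> X -> R) (A : X -> Prop) : Prop :=
  forall x eps, 0 < eps ->
    exists y, A y /\ pball p y eps x /\ pball p x eps y.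

(* Main.v *)
Require Import Defs.
From Stdlib Require Import Reals Lra.
Open Scope R_scope.

Theorem lemma1p3 (X : Type) (pX : X -> X -> R) :
  is_partial_metric pX -> inhabited X ->
  exists (Y : Type) (pY : Y -> Y -> R) (i : X -> Y),
    is_partial_metric pY /\
    (forall x1 x2, i x1 = i x2 -> x1 = x2) /\
    (forall x1 x2, pY (i x1) (i x2) = pX x1 x2) /\
    pdense pY (fun y => exists x, i x = y) /\
    ~ psym_dense pY (fun y => exists x, i x = y).
Proof.
  intros [H0 [H1 [H2 [H3 H4]]]] [x0].
  set (pY := fun u v : option X => match u, v with
    | Some x, Some y => pX x y
    | None, Some y => pX x0 y + 1
    | Some x, None => pX x0 x + 1
    | None, None => pX x0 x0 + 1 end).
  exists (option X), pY, Some.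
  split; [|split; [|split; [|split]]].
  - split; [|split; [|split; [|split]]].
    + intros [x|] [y|]; simpl.
      * apply H0.
      * pose proof (H0 x0 x); lra.
      * pose proof (H0 x0 y); lra.
      * pose proof (H0 x0 x0); lra.
    + intros [x|] [y|]; simpl; intros Ha Hb.
      * f_equal; auto.
      * pose proof (H2 x x0); rewrite (H3 x x0) in *; lra.
      * pose proof (H2 y x0); rewrite (H3 y x0) in *; lra.
      * reflexivity.
    + intros [x|] [y|]; simpl; try lra; auto.
      * pose proof (H2 x x0); rewrite (H3 x x0) in *; lra.
      * pose proof (H2 x0 y); lra.
    + intros [x|] [y|]; simpl; auto; lra.
    + intros [x|] [y|] [z|]; simpl.
      * apply H4.
      * pose proof (H4 x y x0); rewrite (H3 x x0), (H3 y x0) in *; lra.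
      * pose proof (H4 x x0 z); rewrite (H3 x x0) in *; lra.
      * lra.
      * pose proof (H4 x0 y z); lra.
      * pose proof (H4 x0 y x0); rewrite (H3 y x0) in *; lra.
      * lra.
      * lra.
  - intros a b E; injection E; auto.
  - reflexivity.
  - intros [x|] eps Heps.
    + exists (Some x); split; [eauto|]; unfold pball; simpl; lra.
    + exists (Some x0); split; [eauto|]; unfold pball; simpl; lra.
  - intros Hs. destruct (Hs None 1 ltac:(lra)) as [y [[x Ex] [Ha Hb]]].
    subst y; unfold pball in *; simpl in *.
    pose proof (H2 x x0); rewrite (H3 x x0) in *; lra.
Qed.
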